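(* Let $f:[-1,1]\to\mathbb{R}$ be continuous and non-decreasing such that $\kappa(\boldsymbol{x},\boldsymbol{y})=f(\langle\boldsymbol{x},\boldsymbol{y}\rangle/n)$ is a valid (positive semidefinite) kernel on $\{-1,+1\}^n$. Let $\mathcal{U}=\{\boldsymbol{u}^1,\ldots,\boldsymbol{u}^p\}\subset\{-1,+1\}^n$ be such that the real $p\times p$ matrix $C$ with entries $c_{\eta\xi}=f(\langle\boldsymbol{u}^\xi,\boldsymbol{u}^\eta\rangle/n)$ is invertible, and let $\rho>0$. The recurrent kernel associative memory (RKAM) is defined as follows: for each $i=1,\ldots,n$, let $\boldsymbol{\beta}_i=(\beta_i^1,\ldots,\beta_i^p)$ be the solution of $$\min\; Q(\boldsymbol{\beta}_i)=\tfrac12\sum_{\xi,\eta=1}^p\beta_i^\xi\beta_i^\eta u_i^\xi u_i^\eta\kappa(\boldsymbol{u}^\xi,\boldsymbol{u}^\eta)-\sum_{\xi=1}^p\beta_i^\xi\quad\text{subject to } 0\le\beta_i^\xi\le\rho,\ \xi=1,\ldots,p,$$ and the state evolves by $x_i(t+1)=\mathrm{sgn}\big(\sum_{\xi=1}^p\beta_i^\xi u_i^\xi\kappa(\boldsymbol{u}^\xi,\boldsymbol{x}(t))\big)$. The bipolar recurrent projection neural network (RPNN) is defined as follows: with $c^{-1}_{\eta\xi}$ the entries of $C^{-1}$, set $v_i^\xi=\sum_{\eta=1}^pu_i^\eta c^{-1}_{\eta\xi}$; from a state $\boldsymbol{x}(t)\in\{-1,+1\}^n$ compute $w_\xi(t)=f(\langle\boldsymbol{x}(t),\boldsymbol{u}^\xi\rangle/n)$,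 $a_i(t)=\sum_{\xi=1}^pw_\xi(t)v_i^\xi$, and set $x_i(t+1)=\mathrm{sgn}(a_i(t))$ if $a_i(t)\neq0$ and $x_i(t+1)=x_i(t)$ otherwise. If the solutions of the quadratic problems satisfy $0<\beta_i^\xi<\rho$ for all $i=1,\ldots,n$ and $\xi=1,\ldots,p$, then the RKAM coincides with the bipolar RPNN (their activation sums $\sum_\xi\beta_i^\xi u_i^\xi\kappa(\boldsymbol{u}^\xi,\boldsymbol{x})$ and $\sum_\xi w_\xi v_i^\xi$ agree for every state $\boldsymbol{x}$). Alternatively, the RKAM and the bipolar RPNN coincide if $0<v_i^\xi u_i^\xi<\rho$ for all $i=1,\ldots,n$ and $\xi=1,\ldots,p$.
   Context: $\langle\boldsymbol{x},\boldsymbol{y}\rangle=\sum_{i=1}^n x_iy_i$ for bipolar vectors $\boldsymbol{x},\boldsymbol{y}\in\{-1,+1\}^n$; $\mathrm{sgn}$ is the sign function. *)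

(* Defs.v *)
From HB Require Import structures.
From mathcomp Require Import all_boot all_order all_algebra.
From mathcomp Require Import all_classical all_reals all_analysis.
Set Implicit Arguments. Unset Strict Implicit. Unset Printing Implicit Defensive.
Import Order.TTheory GRing.Theory Num.Theory.
Local Open Scope ring_scope.

Section Defs.
Variables (R : realType) (n p : nat).

Definition bipolar (x : 'I_n -> R) : Prop := forall i, x i = 1 \/ x i = -1.

Definition ip (x y : 'I_n -> R) : R := \sum_(i < n) x i * y i.

Definition kappa (f : R -> R) (x y : 'I_n -> R) : R := f (ip x y / n%:R).

Definition psd_kernel (f : R -> R) : Prop :=
  forall (m : nat) (X : 'I_m -> 'I_n -> R) (c : 'I_m -> R),
    (forall k, bipolar (X k)) ->
    0 <= \sum_(k < m) \sum_(l < m) c k * c l * kappa f (X k) (X l).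

Definition Cmat (f : R -> R) (u : 'I_p -> 'I_n -> R) : 'M[R]_p :=
  \matrix_(eta < p, xi < p) kappa f (u xi) (u eta).

Definition Qobj (f : R -> R) (u : 'I_p -> 'I_n -> R) (i : 'I_n) (b : 'I_p -> R) : R :=
  2^-1 * (\sum_(xi < p) \sum_(eta < p)
            b xi * b eta * u xi i * u eta i * kappa f (u xi) (u eta))
  - \sum_(xi < p) b xi.

Definition in_box (rho : R) (b : 'I_p -> R) : Prop :=
  forall xi, 0 <= b xi <= rho.

Definition QP_solution (f : R -> R) (u : 'I_p -> 'I_n -> R) (rho : R)
    (i : 'I_n) (b : 'I_p -> R) : Prop :=
  in_box rho b /\ forall b', in_box rho b' -> Qobj f u i b <= Qobj f u i b'.

Definition vcoef (f : R -> R) (u : 'I_p -> 'I_n -> R) (i : 'I_n) (xi : 'I_p) : R :=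
  \sum_(eta < p) u eta i * (invmx (Cmat f u)) eta xi.

Definition rkam_act (f : R -> R) (u : 'I_p -> 'I_n -> R) (beta : 'I_n -> 'I_p -> R)
    (x : 'I_n -> R) (i : 'I_n) : R :=
  \sum_(xi < p) beta i xi * u xi i * kappa f (u xi) x.

Definition rpnn_act (f : R -> R) (u : 'I_p -> 'I_n -> R) (x : 'I_n -> R) (i : 'I_n) : R :=
  \sum_(xi < p) f (ip x (u xi) / n%:R) * vcoef f u i xi.

End Defs.

(* Main.v *)
Require Import Defs.
From HB Require Import structures.
From mathcomp Require Import all_boot all_order all_algebra.
From mathcomp Require Import all_classical all_reals all_analysis.
From mathcomp Require Import ring lra.
Import Order.TTheory GRing.Theory Num.Theory numFieldNormedType.Exports.
Local Open Scope classical_set_scope.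
Local Open Scope ring_scope.
Set Implicit Arguments. Unset Strict Implicit.

Lemma first_order (R : realType) (g m d1 d2 : R) : 0 < d1 -> 0 < d2 ->
  (forall t, - d1 <= t <= d2 -> 0 <= t * g + t ^+ 2 * m) -> g = 0.
Proof.
move=> d1p d2p H; apply/eqP; apply: contraT => gn0.
have ag : 0 < `|g| by rewrite normr_gt0.
have am : 0 <= `|m| by [].
set k := `|g| / (2 * (`|m| + 1)).
have kp : 0 < k by apply: divr_gt0 => //; lra.
have hk : k * (2 * (`|m| + 1)) = `|g| by rewrite /k mulfVK //; apply/eqP; lra.
set s := Num.min (Num.min d1 d2) k.
have sp : 0 < s by rewrite !lt_min d1p d2p kp.
have s1 : s <= d1 by rewrite !ge_min lexx.
have s2 : s <= d2 by rewrite !ge_min lexx orbT.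
have s3 : s <= k by rewrite ge_min lexx orbT.
have mle : m <= `|m| by exact: ler_norm.
have mge : - `|m| <= m by rewrite lerNl -normrN ler_norm.
have sk : s * (2 * (`|m| + 1)) <= `|g|.
  by rewrite -hk ler_pM2r //; lra.
case: (ltrgt0P g) => [gp|gn|g0]; last by rewrite g0 eqxx in gn0.
- have := H (- s); rewrite (gtr0_norm gp) in sk.
  have : - d1 <= - s <= d2 by apply/andP; split; lra.
  move=> /[swap] /[apply] h.
  have : s * g <= s * s * m by move: h; rewrite expr2; lra.
  nra.
- have := H s; rewrite (ltr0_norm gn) in sk.
  have : - d1 <= s <= d2 by apply/andP; split; lra.
  move=> /[swap] /[apply] h.
  have : - (s * g) <= s * s * m by move: h; rewrite expr2; lra.
  nra.
Qed.

Definition Mm (R : realType) n p (f : R -> R) (u : 'I_p -> 'I_n -> R) (i : 'I_n)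
  (x y : 'I_p) : R := u x i * u y i * kappa f (u x) (u y).
Definition Bf (R : realType) n p (f : R -> R) (u : 'I_p -> 'I_n -> R) (i : 'I_n)
  (a b : 'I_p -> R) : R := \sum_(x < p) \sum_(y < p) a x * b y * Mm f u i x y.
Definition gradf (R : realType) n p (f : R -> R) (u : 'I_p -> 'I_n -> R) (i : 'I_n)
  (a : 'I_p -> R) (y : 'I_p) : R := \sum_(x < p) a x * Mm f u i x y.
Definition ev (R : realType) p (xi : 'I_p) : 'I_p -> R := fun k => (k == xi)%:R.

Lemma ip_sym (R : realType) n (x y : 'I_n -> R) : ip x y = ip y x.
Proof. by apply: eq_bigr => k _; rewrite mulrC. Qed.

Lemma kappa_sym (R : realType) n (f : R -> R) (x y : 'I_n -> R) :
  kappa f x y = kappa f y x.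
Proof. by rewrite /kappa ip_sym. Qed.

Lemma Mm_sym (R : realType) n p (f : R -> R) (u : 'I_p -> 'I_n -> R) i x y :
  Mm f u i x y = Mm f u i y x.
Proof. by rewrite /Mm kappa_sym; ring. Qed.

Lemma Bf_grad (R : realType) n p (f : R -> R) (u : 'I_p -> 'I_n -> R) i a b :
  Bf f u i a b = \sum_(y < p) b y * gradf f u i a y.
Proof.
rewrite /Bf exchange_big; apply: eq_bigr => y _; rewrite mulr_sumr.
by apply: eq_bigr => x _; ring.
Qed.

Lemma Bf_sym (R : realType) n p (f : R -> R) (u : 'I_p -> 'I_n -> R) i a b :
  Bf f u i a b = Bf f u i b a.
Proof.
rewrite /Bf exchange_big; apply: eq_bigr => y _; apply: eq_bigr => x _.
rewrite Mm_sym; ring.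
Qed.

Lemma sum_ev (R : realType) p (xi : 'I_p) (F : 'I_p -> R) :
  \sum_(y < p) ev R xi y * F y = F xi.
Proof.
rewrite (bigD1 xi) //= /ev eqxx mul1r big1 ?addr0 // => y /negbTE ->.
by rewrite mul0r.
Qed.

Lemma sum_ev1 (R : realType) p (xi : 'I_p) : \sum_(y < p) ev R xi y = 1.
Proof. by rewrite -(sum_ev xi (fun _ => 1)); apply: eq_bigr => y _; rewrite mulr1. Qed.

Lemma Bf_expand (R : realType) n p (f : R -> R) (u : 'I_p -> 'I_n -> R) i a h t :
  Bf f u i (fun k => a k + t * h k) (fun k => a k + t * h k) =
  Bf f u i a a + 2 * t * Bf f u i a h + t ^+ 2 * Bf f u i h h.
Proof.
have -> : 2 * t * Bf f u i a h = t * Bf f u i a h + t * Bf f u i h a.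
  by rewrite (Bf_sym _ _ _ h); ring.
rewrite /Bf !mulr_sumr -!big_split /=; apply: eq_bigr => x _.
rewrite !mulr_sumr -!big_split /=; apply: eq_bigr => y _; ring.
Qed.

Lemma Qobj_Bf (R : realType) n p (f : R -> R) (u : 'I_p -> 'I_n -> R) i b :
  Qobj f u i b = 2^-1 * Bf f u i b b - \sum_(x < p) b x.
Proof.
rewrite /Qobj /Bf; congr (_ * _ - _); apply: eq_bigr => x _;
  apply: eq_bigr => y _; rewrite /Mm; ring.
Qed.

Lemma Q_expand (R : realType) n p (f : R -> R) (u : 'I_p -> 'I_n -> R) i a h t :
  Qobj f u i (fun k => a k + t * h k) =
  Qobj f u i a + t * (Bf f u i a h - \sum_(x < p) h x)
     + t ^+ 2 * (2^-1 * Bf f u i h h).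
Proof.
rewrite !Qobj_Bf Bf_expand big_split /= -mulr_sumr.
have h2 : 2^-1 * (2 : R) = 1 by rewrite mulVf.
set A := Bf _ _ _ a a; set B := Bf _ _ _ a h; set C := Bf _ _ _ h h.
rewrite !mulrDr !mulrA h2; ring.
Qed.

Lemma Bf_psd (R : realType) n p (f : R -> R) (u : 'I_p -> 'I_n -> R) i a :
  psd_kernel n f -> (forall xi, bipolar (u xi)) -> 0 <= Bf f u i a a.
Proof.
move=> psd bu.
have := psd p u (fun k => a k * u k i) bu.
congr (_ <= _); apply: eq_bigr => x _; apply: eq_bigr => y _; rewrite /Mm; ring.
Qed.

Lemma usq (R : realType) n (x : 'I_n -> R) k : bipolar x -> x k * x k = 1.
Proof. by move=> /(_ k) [] ->; rewrite ?mulrNN mulr1. Qed.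

Lemma grad_row (R : realType) n p (f : R -> R) (u : 'I_p -> 'I_n -> R) i a xi :
  gradf f u i a xi =
  u xi i * (\row_x (a x * u x i) *m Cmat f u) 0 xi.
Proof.
rewrite /gradf !mxE mulr_sumr; apply: eq_bigr => x _; rewrite !mxE /Mm.
rewrite (kappa_sym _ (u xi)); ring.
Qed.

Lemma grad1 (R : realType) n p (f : R -> R) (u : 'I_p -> 'I_n -> R) i a :
  (forall xi, bipolar (u xi)) -> Cmat f u \in unitmx ->
  (forall xi, gradf f u i a xi = 1) ->
  forall xi, a xi * u xi i = vcoef f u i xi.
Proof.
move=> bu uC H.
have E : \row_x (a x * u x i) *m Cmat f u = \row_x u x i.
  apply/rowP => xi; have := H xi; rewrite grad_row => h.
  move: h; rewrite !mxE => h.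
  by rewrite -[RHS]mulr1 -h mulrA usq // mul1r.
move=> xi.
have := congr1 (fun M => M *m invmx (Cmat f u)) E.
rewrite /= mulmxK // => /rowP /(_ xi); rewrite !mxE => ->.
by apply: eq_bigr => x _; rewrite mxE.
Qed.

Lemma grad0 (R : realType) n p (f : R -> R) (u : 'I_p -> 'I_n -> R) i a :
  (forall xi, bipolar (u xi)) -> Cmat f u \in unitmx ->
  (forall xi, gradf f u i a xi = 0) ->
  forall xi, a xi * u xi i = 0.
Proof.
move=> bu uC H.
have E : \row_x (a x * u x i) *m Cmat f u = 0.
  apply/rowP => xi; have := H xi; rewrite grad_row => h.
  move: h; rewrite !mxE => h.
  by rewrite -[LHS]mul1r -(usq i (bu xi)) -mulrA h mulr0.
move=> xi.
have := congr1 (fun M => M *m invmx (Cmat f u)) E.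
rewrite /= mulmxK // mul0mx => /rowP /(_ xi); by rewrite !mxE.
Qed.

Lemma grad_star (R : realType) n p (f : R -> R) (u : 'I_p -> 'I_n -> R) i :
  (forall xi, bipolar (u xi)) -> Cmat f u \in unitmx ->
  forall y, gradf f u i (fun x => vcoef f u i x * u x i) y = 1.
Proof.
move=> bu uC y.
have E : \row_x (vcoef f u i x * u x i * u x i) *m Cmat f u = \row_x u x i.
  have -> : \row_x (vcoef f u i x * u x i * u x i) =
            (\row_x u x i) *m invmx (Cmat f u).
    apply/rowP => x; rewrite !mxE -mulrA usq // mulr1.
    by apply: eq_bigr => k _; rewrite mxE.
  by rewrite -mulmxA mulVmx // mulmx1.
rewrite grad_row E mxE; exact: usq.
Qed.

Lemma act_eq (R : realType) n p (f : R -> R) (u : 'I_p -> 'I_n -> R) beta x i :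
  (forall xi, beta i xi * u xi i = vcoef f u i xi) ->
  rkam_act f u beta x i = rpnn_act f u x i.
Proof.
move=> H; apply: eq_bigr => xi _; rewrite H /kappa ip_sym mulrC //.
Qed.

Unset Implicit Arguments.

Theorem theorem3 (R : realType) (n p : nat) (f : R -> R)
    (u : 'I_p -> 'I_n -> R) (rho : R) (beta : 'I_n -> 'I_p -> R) :
  {within `[-1, 1], continuous f} ->
  (forall x y : R, -1 <= x <= 1 -> -1 <= y <= 1 -> x <= y -> f x <= f y) ->
  psd_kernel n f ->
  (forall xi, bipolar (u xi)) ->
  Cmat f u \in unitmx ->
  0 < rho ->
  (forall i, QP_solution f u rho i (beta i)) ->
  ((forall i xi, 0 < beta i xi < rho) ->
     forall x : 'I_n -> R, bipolar x ->
       forall i, rkam_act f u beta x i = rpnn_act f u x i)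
  /\
  ((forall i xi, 0 < vcoef f u i xi * u xi i < rho) ->
     forall x : 'I_n -> R, bipolar x ->
       forall i, rkam_act f u beta x i = rpnn_act f u x i).
Proof.
move=> _ _ psd bu uC rhop QP; split.
- move=> H1 x _ i; apply: act_eq; apply: grad1 => // xi.
  have g0 : Bf f u i (beta i) (ev R xi) - \sum_(k < p) ev R xi k = 0.
    apply: (@first_order R _ (2^-1 * Bf f u i (ev R xi) (ev R xi))
               (beta i xi) (rho - beta i xi)).
    + by case/andP: (H1 i xi).
    + by case/andP: (H1 i xi) => _ h; rewrite subr_gt0.
    move=> t /andP [t1 t2].
    have box : in_box rho (fun k => beta i k + t * ev R xi k).
      move=> k; rewrite /ev; case: eqP => [->|_].
        by rewrite mulr1; apply/andP; split; lra.
      by rewrite mulr0 addr0; exact: (QP i).1 k.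
    have := (QP i).2 _ box; rewrite Q_expand; lra.
  move: g0; rewrite sum_ev1 Bf_grad sum_ev => g0; lra.
- move=> H2 x _ i; apply: act_eq.
  set bs := fun k => vcoef f u i k * u k i.
  set h := fun k => beta i k - bs k.
  have gs := grad_star i bu uC.
  have Bbs : forall y, Bf f u i bs y = \sum_(k < p) y k.
    by move=> y; rewrite Bf_grad; apply: eq_bigr => k _; rewrite gs mulr1.
  have boxs : in_box rho bs.
    by move=> k; case/andP: (H2 i k) => h1 h2; rewrite /bs; apply/andP; split; lra.
  have Qle := (QP i).2 _ boxs.
  have eb : beta i = fun k => bs k + 1 * h k.
    by apply: funext => k; rewrite /h; ring.
  have Bhh : Bf f u i h h <= 0.
    move: Qle; rewrite eb Q_expand Bbs subrr; lra.
  have Bh0 : forall y, Bf f u i h y = 0.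
    move=> y.
    have : 2 * Bf f u i h y = 0.
      apply: (@first_order R _ (Bf f u i y y) 1 1) => // t _.
      have := Bf_psd i (fun k => h k + t * y k) psd bu.
      rewrite Bf_expand; lra.
    lra.
  have gh : forall xi, gradf f u i h xi = 0.
    by move=> xi; rewrite -(Bh0 (ev R xi)) Bf_grad sum_ev.
  have := grad0 bu uC gh => hk k.
  have := hk k; rewrite /h /bs mulrBl -mulrA usq // mulr1; lra.
Qed.
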